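(* Let $r,n\in\mathbb{N}$ with $r\leq n$, and let $\mathbf{s}=(s_1,\ldots,s_r)$ and $\mathbf{t}=(t_1,\ldots,t_r)$ be $r$-tuples of positive integers such that $\mathbf{s}\geq\mathbf{t}$. Then $\overline{H}_n(s_1,\ldots,s_r)\leq\overline{H}_n(t_1,\ldots,t_r)$.
   Context: $\mathbb{N}$ is the set of positive integers. $\overline{H}_n(s_1,\ldots,s_r)=\sum_{0\leq k_1<\cdots<k_r\leq n-1}\prod_{j=1}^r (2k_j+1)^{-s_j}$. For $r$-tuples of positive integers, $\mathbf{s}\geq\mathbf{t}$ means: $s_1+\cdots+s_r\geq t_1+\cdots+t_r$, and there is some $0\leq l\leq r-1$ with $s_i\leq t_i$ for $1\leq i\leq l$ and $s_i\geq t_i$ for $l+1\leq i\leq r$. *)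

(* Defs.v *)
From mathcomp Require Import all_boot all_order all_algebra.
Set Implicit Arguments. Unset Strict Implicit. Unset Printing Implicit Defensive.
Import Order.TTheory GRing.Theory Num.Theory.
Local Open Scope ring_scope.

(* Hbar_n(s_1,...,s_r) = sum over 0 <= k_1 < ... < k_r <= n-1 of
   prod_j (2 k_j + 1)^(-s_j).  Indices j are 0-based: j : 'I_r.
   The sum ranges over strictly increasing maps k : 'I_r -> 'I_n. *)
Definition strict_incr (r n : nat) (k : {ffun 'I_r -> 'I_n}) : bool :=
  [forall i : 'I_r, forall j : 'I_r, (i < j)%N ==> (k i < k j)%N].

Definition Hbar (n r : nat) (s : 'I_r -> nat) : rat :=
  \sum_(k : {ffun 'I_r -> 'I_n} | strict_incr k)
     \prod_(j < r) (((2 * k j + 1)%N)%:R ^- (s j)).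

Definition tuple_ge (r : nat) (s t : 'I_r -> nat) : Prop :=
  (\sum_(i < r) t i <= \sum_(i < r) s i)%N /\
  exists l : nat, (l <= r.-1)%N /\
    (forall i : 'I_r, (i < l)%N -> (s i <= t i)%N) /\
    (forall i : 'I_r, (l <= i)%N -> (t i <= s i)%N).

(* Main.v *)
Require Import Defs.
From mathcomp Require Import all_boot all_order all_algebra.
Import Order.TTheory GRing.Theory Num.Theory.
Local Open Scope ring_scope.

Local Open Scope nat_scope.
Lemma expn_mono (e m n : nat) : (m <= n)%N -> (m ^ e <= n ^ e)%N.
Proof. move=> h; elim: e => [|e IH] //; rewrite !expnS; exact: leq_mul. Qed.

Lemma key_nat (r : nat) (b s t : 'I_r -> nat) (l : 'I_r) :
  (forall i, 0 < b i)%N ->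
  (forall i : 'I_r, (i < l)%N -> (b i <= b l)%N /\ (s i <= t i)%N) ->
  (forall i : 'I_r, (l <= i)%N -> (b l <= b i)%N /\ (t i <= s i)%N) ->
  (\sum_(i < r) t i <= \sum_(i < r) s i)%N ->
  (\prod_(i < r) b i ^ t i <= \prod_(i < r) b i ^ s i)%N.
Proof.
move=> bpos Hlt Hge Hsum.
have h i : (b i ^ t i * b l ^ s i <= b i ^ s i * b l ^ t i)%N.
  case: (ltnP i l) => hi.
    case: (Hlt i hi) => hb hs.
    move: (subnKC hs); move: (t i - s i)%N => d <-; rewrite !expnD.
    have := @expn_mono d _ _ hb.
    set X := b i ^ s i; set Y := b i ^ _; set Z := b l ^ s i; set W := b l ^ _.
    move=> hYW; apply: leq_trans (leq_mul (leq_mul (leqnn X) hYW) (leqnn Z)) _.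
    by rewrite -mulnA [W * Z]mulnC.
  case: (Hge i hi) => hb hs.
  move: (subnKC hs); move: (s i - t i)%N => d <-; rewrite !expnD.
  have := @expn_mono d _ _ hb.
  set X := b i ^ t i; set Y := b i ^ _; set Z := b l ^ t i; set W := b l ^ _.
  move=> hWY; apply: leq_trans _ (leq_mul (leq_mul (leqnn X) hWY) (leqnn Z)).
  by rewrite -mulnA [W * Z]mulnC.
have := @leq_prod _ (index_enum 'I_r) predT
  (fun i => b i ^ t i * b l ^ s i)%N (fun i => b i ^ s i * b l ^ t i)%N (fun i _ => h i).
rewrite !big_split /= -!expn_sum => H.
have cT : (0 < b l ^ (\sum_(i < r) t i))%N by rewrite expn_gt0 bpos.
rewrite -(leq_pmul2r cT); apply: leq_trans H.
by rewrite leq_mul2l leq_pexp2l ?bpos ?orbT.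
Qed.

Local Open Scope ring_scope.
Theorem lemma2p2 (r n : nat) (s t : 'I_r -> nat) :
  (0 < r)%N -> (0 < n)%N -> (r <= n)%N ->
  (forall i, (0 < s i)%N) -> (forall i, (0 < t i)%N) ->
  tuple_ge s t ->
  Hbar n s <= Hbar n t.
Proof.
move=> r0 n0 rn _ _ [Hsum [l [lr [Hlt Hge]]]].
have lr' : (l < r)%N by rewrite (leq_ltn_trans lr) // prednK.
pose L := Ordinal lr'.
rewrite /Hbar; apply: ler_sum => k /forallP kinc.
set b := fun j : 'I_r => (2 * k j + 1)%N.
have bpos j : (0 < b j)%N by rewrite /b addn1.
have bmono (i j : 'I_r) : (i < j)%N -> (b i < b j)%N.
  move=> ij; have := implyP (forallP (kinc i) j) ij.
  by rewrite /b ltn_add2r ltn_mul2l.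
have E (u : 'I_r -> nat) :
  \prod_(j < r) (((2 * k j + 1)%N)%:R ^- (u j)) = ((\prod_(j < r) b j ^ u j)%N%:R)^-1 :> rat.
  by rewrite prodfV natr_prod; congr (_^-1); apply: eq_bigr => j _; rewrite natrX.
rewrite !E lef_pV2 ?posrE ?ltr0n ?prodn_gt0 ?ler_nat // => [|j|j]; last 2 first.
- by rewrite expn_gt0 bpos.
- by rewrite expn_gt0 bpos.
apply: (@key_nat _ _ _ _ L) => //.
- move=> i hi; split; first by apply: ltnW; apply: bmono.
  exact: Hlt.
- move=> i hi; split; last exact: Hge.
  rewrite leq_eqVlt in hi; case/orP: hi => [/eqP e|hi].
    by have -> : L = i by apply: val_inj.
  by apply: ltnW; apply: bmono.
Qed.
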